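(* Let $D,\bar D$ be star tree metrics on the taxa $\{1,2,3,4\}$, where $D$ has pendant edge weights $a,d,c,e>0$ at leaves $1,2,3,4$ respectively and $\bar D$ has pendant edge weights $\bar a,\bar d,\bar c,\bar e>0$ at leaves $1,2,3,4$. Define $s=\bar D_{13}-D_{13}$, $t=\bar D_{24}-D_{24}$, $x=\bar D_{14}-D_{14}$, $y=\bar D_{23}-D_{23}$, $u=\bar D_{12}-D_{12}$, $w=\bar D_{34}-D_{34}$ (so e.g. $\bar a+\bar c=a+c+s$), and write $z^+=\max\{z,0\}$. Let $T=D\oplus\bar D$. Then $T$ is a tree metric realized by the quartet tree $(12|34)$ with internal edge of positive weight if and only if $$u^+ + w^+ < s^+ + t^+ = x^+ + y^+.$$
   Context: The tropical mixture is the entrywise maximum $(D\oplus\bar D)_{pq}=\max\{D_{pq},\bar D_{pq}\}$. A star tree metric on $\{1,2,3,4\}$ is a matrix with $D_{pq}=w_p+w_q$ ($p\neq q$), zero diagonal, for positive edge weights $w_p$. The quartet tree $(12|34)$ is the tree in which leaves $1,2$ are attached to one endpoint of an internal edge and leaves $3,4$ to the other endpoint. *)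

(* Defs.v *)
From HB Require Import structures.
From mathcomp Require Import all_boot all_order all_algebra.
Set Implicit Arguments. Unset Strict Implicit. Unset Printing Implicit Defensive.
Import Order.TTheory GRing.Theory Num.Theory.
Local Open Scope ring_scope.

(* Taxa 1,2,3,4 are represented by the ordinals 0,1,2,3 of 'I_4. *)
Definition taxon (k : nat) : 'I_4 := inord k.-1.

Definition leafw (R : realFieldType) (w1 w2 w3 w4 : R) : 'I_4 -> R :=
  fun i => nth 0 [:: w1; w2; w3; w4] i.

Definition star_metric (R : realFieldType) (w : 'I_4 -> R) : 'I_4 -> 'I_4 -> R :=
  fun p q => if p == q then 0 else w p + w q.

Definition tmix (R : realFieldType) (D Db : 'I_4 -> 'I_4 -> R) : 'I_4 -> 'I_4 -> R :=
  fun p q => Num.max (D p q) (Db p q).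

(* Side of the split 12|34: leaves 1,2 (ordinals 0,1) vs leaves 3,4. *)
Definition side12 (p : 'I_4) : bool := (p < 2)%N.

Definition quartet_metric (R : realFieldType) (w : 'I_4 -> R) (l : R)
  : 'I_4 -> 'I_4 -> R :=
  fun p q => if p == q then 0
             else w p + w q + (if side12 p == side12 q then 0 else l).

Definition realized_by_12_34_pos (R : realFieldType) (T : 'I_4 -> 'I_4 -> R) : Prop :=
  exists (w : 'I_4 -> R) (l : R),
    (forall i, 0 < w i) /\ 0 < l /\ (forall p q, T p q = quartet_metric w l p q).

Definition posp (R : realFieldType) (z : R) : R := Num.max z 0.

(* Main.v *)
Require Import Defs.
From HB Require Import structures.
From mathcomp Require Import all_boot all_order all_algebra.
From mathcomp Require Import lra.
Import Order.TTheory GRing.Theory Num.Theory.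
Local Open Scope ring_scope.
Section S.
Variable R : realFieldType.
Lemma maxE (A B : R) : Num.max A B = A + posp (B - A).
Proof. rewrite /posp /Order.max; case: (ltP A B) => h; case: ltP => h2; lra. Qed.
Lemma posp_facts (z : R) : [/\ 0 <= posp z, z <= posp z & (posp z = z \/ posp z = 0)].
Proof. rewrite /posp /Order.max; case: ltP => h; split; try lra; by [left|right]. Qed.
Definition o0 : 'I_4 := @Ordinal 4 0 isT.
Definition o1 : 'I_4 := @Ordinal 4 1 isT.
Definition o2 : 'I_4 := @Ordinal 4 2 isT.
Definition o3 : 'I_4 := @Ordinal 4 3 isT.
Lemma ord4 (p : 'I_4) : [\/ p = o0, p = o1, p = o2 | p = o3].
Proof. case: p => [[|[|[|[|m]]]] Hm] //.
 by apply: Or41; apply/val_inj. by apply: Or42; apply/val_inj.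
 by apply: Or43; apply/val_inj. by apply: Or44; apply/val_inj. Qed.
Lemma tx1 : taxon 1 = o0. Proof. by apply/val_inj; rewrite /= inordK. Qed.
Lemma tx2 : taxon 2 = o1. Proof. by apply/val_inj; rewrite /= inordK. Qed.
Lemma tx3 : taxon 3 = o2. Proof. by apply/val_inj; rewrite /= inordK. Qed.
Lemma tx4 : taxon 4 = o3. Proof. by apply/val_inj; rewrite /= inordK. Qed.

Lemma back (T : 'I_4 -> 'I_4 -> R) : (forall p, T p p = 0) -> (forall p q, T p q = T q p) ->
  T o0 o2 + T o1 o3 = T o0 o3 + T o1 o2 -> T o0 o1 + T o2 o3 < T o0 o2 + T o1 o3 ->
  0 < T o0 o1 + T o0 o2 - T o1 o2 -> 0 < T o0 o1 + T o1 o2 - T o0 o2 ->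
  0 < T o2 o3 + T o0 o2 - T o0 o3 -> 0 < T o2 o3 + T o0 o3 - T o0 o2 ->
  realized_by_12_34_pos T.
Proof.
move=> Td Ts h1 h2 p1 p2 p3 p4.
exists (leafw ((T o0 o1 + T o0 o2 - T o1 o2)/2) ((T o0 o1 + T o1 o2 - T o0 o2)/2)
   ((T o2 o3 + T o0 o2 - T o0 o3)/2) ((T o2 o3 + T o0 o3 - T o0 o2)/2)).
exists ((T o0 o2 + T o1 o3 - T o0 o1 - T o2 o3)/2).
split; [|split].
- by move=> i; case: (ord4 i) => ->; rewrite /leafw /=; lra.
- lra.
- move=> p q; case: (ord4 p) => ->; case: (ord4 q) => ->;
  rewrite /quartet_metric /side12 /leafw /= ?Td
   ?(Ts o1 o0) ?(Ts o2 o0) ?(Ts o3 o0) ?(Ts o2 o1) ?(Ts o3 o1) ?(Ts o3 o2); lra.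
Qed.
End S.

Theorem proposition3p1 (R : realFieldType) (a d c e ab db cb eb : R) :
  0 < a -> 0 < d -> 0 < c -> 0 < e ->
  0 < ab -> 0 < db -> 0 < cb -> 0 < eb ->
  let D := star_metric (leafw a d c e) in
  let Db := star_metric (leafw ab db cb eb) in
  let s := Db (taxon 1) (taxon 3) - D (taxon 1) (taxon 3) in
  let t := Db (taxon 2) (taxon 4) - D (taxon 2) (taxon 4) in
  let x := Db (taxon 1) (taxon 4) - D (taxon 1) (taxon 4) in
  let y := Db (taxon 2) (taxon 3) - D (taxon 2) (taxon 3) in
  let u := Db (taxon 1) (taxon 2) - D (taxon 1) (taxon 2) in
  let w := Db (taxon 3) (taxon 4) - D (taxon 3) (taxon 4) in
  let T := tmix D Db in
  realized_by_12_34_pos T <->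
  (posp u + posp w < posp s + posp t /\ posp s + posp t = posp x + posp y).
Proof.
move=> ha hd hc he hab hdb hcb heb D Db s t x y u w T.
rewrite /s /t /x /y /u /w /D /Db !tx1 !tx2 !tx3 !tx4 /star_metric /leafw /=.
case: (@posp_facts R (ab + cb - (a + c))) => [s1 s2 s3].
case: (@posp_facts R (db + eb - (d + e))) => [t1 t2 t3].
case: (@posp_facts R (ab + eb - (a + e))) => [x1 x2 x3].
case: (@posp_facts R (db + cb - (d + c))) => [y1 y2 y3].
case: (@posp_facts R (ab + db - (a + d))) => [u1 u2 u3].
case: (@posp_facts R (cb + eb - (c + e))) => [w1 w2 w3].
split.
- case=> [wf [l [Hw [Hl H]]]].
  move: (H o0 o1) (H o2 o3) (H o0 o2) (H o1 o3) (H o0 o3) (H o1 o2).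
  rewrite /T /tmix /D /Db /star_metric /leafw /quartet_metric /side12 /= !maxE.
  move=> e1 e2 e3 e4 e5 e6; split; lra.
- case=> h1 h2.
  apply: back.
  + by move=> p; rewrite /T /tmix /D /Db /star_metric eqxx /Order.max ltxx.
  + by move=> p q; rewrite /T /tmix /D /Db /star_metric eq_sym (addrC (leafw a d c e q)) (addrC (leafw ab db cb eb q)).
  all: rewrite /T /tmix /D /Db /star_metric /leafw /= !maxE.
  all: case: s3 => s3; case: x3 => x3; case: y3 => y3; lra.
Qed.
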